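(* Let $M,N$ be finitary matroids on $E$, $b=(B_M,B_N)$ with $B_M$ a base of $M$ and $B_N$ a base of $N$, let $P$ be a finite directed path without shortcuts in $D(b)$, let $(B_M',B_N'):=b\circ P$, and let $U$ be the union of the escorting circuits of the arcs of $P$. Then $D_M(B_M')[E\setminus U]=D_M(B_M)[E\setminus U]$ and $D_N(B_N')[E\setminus U]=D_N(B_N)[E\setminus U]$.
   Context: For a base $B$ of a matroid $M$ on $E$, $D_M(B)$ is the digraph on $E$ with $ef\in D_M(B)$ iff $e\in E\setminus B$ and $f\in C_M(e,B)\setminus\{e\}$ ($C_M(e,B)$ the fundamental circuit of $e$ on $B$). $D^{-1}$ reverses all arcs; $D(b):=D_M(B_M)\cup D_N^{-1}(B_N)$. Escorting circuits of an arc $ef\in D(b)$: $C_M(e,B_M)$ if $ef\in D_M(B_M)$, and $C_N(f,B_N)$ if $ef\in D_N^{-1}(B_N)$. A shortcut of a path $P$ is an arc $ef\in D(b)$ with $e,f\in E(P)$, $f$ later than $e$ on $P$, $ef\notin A(P)$. $b\circ P=(B_M',B_N')$ where $B_M'$ is obtained from $B_M$ by adding tails and deleting heads of arcs in $A(P)\cap D_M(B_M)$, and $B_N'$ from $B_N$ by adding heads and deleting tails of arcs in $A(P)\cap D_N^{-1}(B_N)$ (these are bases). $D[X]$ denotes the subdigraph induced on $X$. *)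

(* Defs.v *)
From Stdlib Require Import List Arith.
Import ListNotations.

Definition subset {E : Type} (X Y : E -> Prop) : Prop := forall x, X x -> Y x.

(* Finitary matroid given by its independent sets (independence space of
   finite character): empty set independent, subset-closed, augmentation for
   finite independent sets, and a set is independent iff all its finite
   subsets are. *)
Record finitary_matroid (E : Type) := FinitaryMatroid {
  indep : (E -> Prop) -> Prop;
  indep_empty : indep (fun _ => False);
  indep_subset : forall X Y, indep Y -> subset X Y -> indep X;
  indep_aug : forall lI lJ : list E, NoDup lI -> NoDup lJ ->
    indep (fun x => In x lI) -> indep (fun x => In x lJ) ->
    length lI < length lJ ->
    exists x, In x lJ /\ ~ In x lI /\ indep (fun y => In y lI \/ y = x);
  indep_finitary : forall X : E -> Prop,
    (forall l : list E, (forall x, In x l -> X x) -> indep (fun x => In x l)) ->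
    indep X
}.
Arguments indep {E}.

Definition is_base {E} (M : finitary_matroid E) (B : E -> Prop) : Prop :=
  indep M B /\ forall X, indep M X -> subset B X -> subset X B.

Definition is_circuit {E} (M : finitary_matroid E) (C : E -> Prop) : Prop :=
  ~ indep M C /\
  forall X, subset X C -> (exists x, C x /\ ~ X x) -> indep M X.

(* fundamental circuit C_M(e,B): the (unique, for B a base and e not in B)
   circuit contained in B + e; written as the union of circuits in B + e. *)
Definition fund_circuit {E} (M : finitary_matroid E) (e : E) (B : E -> Prop)
  : E -> Prop :=
  fun f => exists C, is_circuit M C /\ subset C (fun x => B x \/ x = e) /\ C f.

Definition DM {E} (M : finitary_matroid E) (B : E -> Prop) (e f : E) : Prop :=
  ~ B e /\ fund_circuit M e B f /\ f <> e.

Definition Dinv {E} (D : E -> E -> Prop) (e f : E) : Prop := D f e.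

Definition Db {E} (M N : finitary_matroid E) (BM BN : E -> Prop) (e f : E)
  : Prop := DM M BM e f \/ Dinv (DM N BN) e f.

Fixpoint path_arcs {E} (l : list E) : list (E * E) :=
  match l with
  | x :: ((y :: _) as t) => (x, y) :: path_arcs t
  | _ => []
  end.

Definition is_dipath {E} (D : E -> E -> Prop) (P : list E) : Prop :=
  NoDup P /\ forall e f, In (e, f) (path_arcs P) -> D e f.

Definition is_shortcut {E} (D : E -> E -> Prop) (P : list E) (e f : E) : Prop :=
  D e f /\ (exists l1 l2 l3, P = l1 ++ e :: l2 ++ f :: l3) /\
  ~ In (e, f) (path_arcs P).

Definition no_shortcuts {E} (D : E -> E -> Prop) (P : list E) : Prop :=
  forall e f, ~ is_shortcut D P e f.

Definition compose_M {E} (M : finitary_matroid E) (BM : E -> Prop) (P : list E)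
  : E -> Prop :=
  fun x =>
    (BM x \/ exists f, In (x, f) (path_arcs P) /\ DM M BM x f) /\
    ~ (exists e, In (e, x) (path_arcs P) /\ DM M BM e x).

Definition compose_N {E} (N : finitary_matroid E) (BN : E -> Prop) (P : list E)
  : E -> Prop :=
  fun x =>
    (BN x \/ exists e, In (e, x) (path_arcs P) /\ Dinv (DM N BN) e x) /\
    ~ (exists f, In (x, f) (path_arcs P) /\ Dinv (DM N BN) x f).

Definition escort {E} (M N : finitary_matroid E) (BM BN : E -> Prop) (e f : E)
  : E -> Prop :=
  fun x => (DM M BM e f /\ fund_circuit M e BM x) \/
           (Dinv (DM N BN) e f /\ fund_circuit N f BN x).

Definition escort_union {E} (M N : finitary_matroid E) (BM BN : E -> Prop)
  (P : list E) : E -> Prop :=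
  fun x => exists e f, In (e, f) (path_arcs P) /\ escort M N BM BN e f x.

(* Main.v *)
Require Import Defs.
From Stdlib Require Import List Arith Lia Classical.
Import ListNotations.

Definition seteq {E : Type} (X Y : E -> Prop) : Prop := forall z, X z <-> Y z.
Definition exch {E : Type} (B : E -> Prop) (y x : E) : E -> Prop :=
  fun z => (B z /\ z <> y) \/ z = x.


Lemma arcs_iff {E : Type} : forall (P : list E) a w,
  In (a, w) (path_arcs P) <-> exists k1 k2, P = k1 ++ a :: w :: k2.
Proof.
  induction P as [|x t IH]; intros a w.
  - simpl. split; [tauto|]. intros [k1 [k2 H]]. destruct k1; discriminate.
  - destruct t as [|y t'].
    + simpl. split; [tauto|]. intros [k1 [k2 H]].
      destruct k1 as [|c [|d k1]]; simpl in H; discriminate.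
    + change (path_arcs (x :: y :: t')) with ((x, y) :: path_arcs (y :: t')).
      simpl In. rewrite IH. split.
      * intros [H|[k1 [k2 H]]].
        -- inversion H; subst. exists [], t'. reflexivity.
        -- exists (x :: k1), k2. rewrite H. reflexivity.
      * intros [k1 [k2 H]]. destruct k1 as [|c k1].
        -- simpl in H. inversion H; subst. left; reflexivity.
        -- simpl in H. inversion H; subst. right. exists k1, k2. auto.
Qed.

Lemma arcs_in {E : Type} : forall (P : list E) a w,
  In (a, w) (path_arcs P) -> In a P /\ In w P.
Proof.
  intros P a w H. apply arcs_iff in H. destruct H as [k1 [k2 ->]].
  split; apply in_or_app; simpl; auto.
Qed.

Lemma nodup_split {E : Type} : forall (l1 k1 r1 r2 : list E) a,
  NoDup (l1 ++ a :: r1) -> l1 ++ a :: r1 = k1 ++ a :: r2 -> r1 = r2.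
Proof.
  induction l1 as [|c l1 IH]; intros k1 r1 r2 a Hn H.
  - destruct k1 as [|d k1]; simpl in H; inversion H; subst; auto.
    exfalso. inversion Hn; subst. apply H2. apply in_or_app; simpl; auto.
  - destruct k1 as [|d k1]; simpl in H; inversion H; subst.
    + exfalso. inversion Hn; subst. apply H2. apply in_or_app; simpl; auto.
    + inversion Hn; subst. eapply IH; eauto.
Qed.

Lemma noarc_mid {E : Type} : forall (P l1 m l3 : list E) a w,
  NoDup P -> P = l1 ++ a :: m ++ w :: l3 -> m <> [] -> ~ In (a, w) (path_arcs P).
Proof.
  intros P l1 m l3 a w Hn HP Hm Ha. apply arcs_iff in Ha. destruct Ha as [k1 [k2 Hk]].
  rewrite HP in Hk. rewrite HP in Hn.
  pose proof (nodup_split _ _ _ _ _ Hn Hk) as H.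
  destruct m as [|c m]; [auto|]. simpl in H. inversion H; subst.
  apply (NoDup_remove_2 (l1 ++ [a]) (m ++ w :: l3) w).
  - rewrite <- app_assoc. exact Hn.
  - apply in_or_app; right; apply in_or_app; right; simpl; auto.
Qed.

Lemma noarc_head {E : Type} : forall (t : list E) x e,
  NoDup (x :: t) -> ~ In (e, x) (path_arcs (x :: t)).
Proof.
  intros t x e Hn Ha. apply arcs_iff in Ha. destruct Ha as [k1 [k2 Hk]].
  inversion Hn; subst. destruct k1 as [|c k1]; simpl in Hk; inversion Hk; subst.
  - apply H1; simpl; auto.
  - apply H1. apply in_or_app; simpl; auto.
Qed.

Lemma arcs_rev {E : Type} : forall (P : list E) a w,
  In (a, w) (path_arcs (rev P)) <-> In (w, a) (path_arcs P).
Proof.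
  intros P a w. rewrite !arcs_iff. split; intros [k1 [k2 H]].
  - exists (rev k2), (rev k1). rewrite <- (rev_involutive P), H.
    rewrite rev_app_distr. simpl. rewrite <- !app_assoc. reflexivity.
  - exists (rev k2), (rev k1). rewrite H.
    rewrite rev_app_distr. simpl. rewrite <- !app_assoc. reflexivity.
Qed.

Section Mat.
Variable E : Type.
Variable M : finitary_matroid E.

Lemma isub : forall X Y : E -> Prop, indep M Y -> (forall z, X z -> Y z) -> indep M X.
Proof. intros X Y H H'. exact (indep_subset E M X Y H H'). Qed.

Lemma indep_ext : forall X Y : E -> Prop, seteq X Y -> indep M X -> indep M Y.
Proof. intros X Y H H'. apply (isub Y X H'). intros z; apply H. Qed.

Lemma mk_list : forall (l : list E) (P : E -> Prop),
  exists l', NoDup l' /\ forall x, In x l' <-> In x l /\ P x.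
Proof.
  induction l as [|a l IH]; intros P.
  - exists []. split; [constructor|]. simpl; tauto.
  - destruct (IH P) as [l' [Hn Hi]].
    destruct (classic (P a /\ ~ In a l')) as [H|H].
    + exists (a :: l'). split; [constructor; tauto|].
      intros x; simpl; rewrite Hi. split.
      * intros [<-|Hx]; tauto.
      * intros [[<-|Hx] Hp]; tauto.
    + exists l'. split; auto. intros x; simpl; rewrite Hi. split; [tauto|].
      intros [[<-|Hx] Hp]; [|tauto].
      apply NNPP; intro Hn'. apply H; split; auto. rewrite Hi; tauto.
Qed.

Lemma fin_dep : forall X : E -> Prop, ~ indep M X ->
  exists l, NoDup l /\ (forall x, In x l -> X x) /\ ~ indep M (fun x => In x l).
Proof.
  intros X HX. apply NNPP; intro H. apply HX. apply indep_finitary.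
  intros l Hl. apply NNPP; intro Hd.
  destruct (mk_list l (fun _ => True)) as [l' [Hn Hi]].
  apply H. exists l'. split; auto. split.
  - intros x Hx. apply Hl. apply Hi; auto.
  - intro Hi'. apply Hd. apply (indep_ext (fun x => In x l')); auto.
    intro z. rewrite Hi. tauto.
Qed.

Lemma aug_to : forall n (I J : list E), length J - length I = n ->
  NoDup I -> NoDup J -> indep M (fun x => In x I) -> indep M (fun x => In x J) ->
  length I <= length J ->
  exists K, NoDup K /\ indep M (fun x => In x K) /\ incl I K /\ incl K (I ++ J)
    /\ length K = length J.
Proof.
  induction n as [|n IH]; intros I J Hn HI HJ hI hJ Hle.
  - exists I. split; [auto|split;[auto|split;[apply incl_refl|split;[apply incl_appl, incl_refl|lia]]]].
  - destruct (indep_aug E M I J HI HJ hI hJ) as [x [Hx1 [Hx2 Hx3]]]; [lia|].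
    destruct (IH (x :: I) J) as [K [HK1 [HK2 [HK3 [HK4 HK5]]]]]; simpl; auto.
    + lia.
    + constructor; auto.
    + apply (indep_ext (fun y => In y I \/ y = x)); auto. intro z; simpl; split; intros [H|H]; auto.
    + lia.
    + exists K. repeat split; auto.
      * intros y Hy. apply HK3. simpl; auto.
      * intros y Hy. apply HK4 in Hy. simpl in Hy. apply in_app_iff.
        destruct Hy as [<-|Hy]; auto. apply in_app_iff in Hy; tauto.
Qed.

Lemma circ_fin : forall C, is_circuit M C -> exists L, NoDup L /\ forall x, In x L <-> C x.
Proof.
  intros C [Hd Hm]. destruct (fin_dep C Hd) as [L [Hn [HL Hi]]].
  exists L. split; auto. intros x; split; auto. intros Hx.
  apply NNPP; intro Hx'. apply Hi. apply Hm; auto. exists x; auto.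
Qed.

Lemma circ_in_list : forall n (L : list E), length L <= n -> ~ indep M (fun x => In x L) ->
  exists C, is_circuit M C /\ forall x, C x -> In x L.
Proof.
  induction n as [|n IH]; intros L Hl Hd.
  - destruct L; [|simpl in Hl; lia]. exfalso; apply Hd.
    apply (isub _ (fun _ => False)); [apply indep_empty|]. simpl; auto.
  - destruct (classic (exists x, In x L /\ ~ indep M (fun z => In z L /\ z <> x))) as [[x [Hx Hx']]|H].
    + destruct (mk_list L (fun z => z <> x)) as [L' [Hn Hi]].
      destruct (IH L') as [C [HC1 HC2]].
      * assert (length (x :: L') <= length L); [|simpl in *; lia].
        apply NoDup_incl_length.
        -- constructor; auto. rewrite Hi; tauto.
        -- intros y [<-|Hy]; auto. apply Hi in Hy; tauto.
      * intro Hi'. apply Hx'. apply (indep_ext (fun z => In z L')); auto; intro z; rewrite Hi; tauto.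
      * exists C. split; auto. intros y Hy. apply HC2 in Hy. apply Hi in Hy; tauto.
    + exists (fun x => In x L). split; [split|]; auto.
      intros X HX [x [Hx Hx']].
      apply (isub _ (fun z => In z L /\ z <> x)).
      * apply NNPP; intro Hc. apply H. exists x; auto.
      * intros z Hz. split; auto. intros ->; auto.
Qed.

Lemma circ_has : forall (B C : E -> Prop) a, indep M B -> is_circuit M C ->
  (forall z, C z -> B z \/ z = a) -> C a.
Proof.
  intros B C a HB [Hd _] Hs. apply NNPP; intro Ha. apply Hd.
  apply (isub _ B HB). intros z Hz. destruct (Hs z Hz) as [H| ->]; tauto.
Qed.

Lemma fc_exch : forall (B C : E -> Prop) e f, indep M B -> is_circuit M C ->
  (forall z, C z -> B z \/ z = e) -> C f -> f <> e -> indep M (exch B f e).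
Proof.
  intros B C e f HB HC Hs Hf Hfe.
  destruct (classic (B e)) as [He|He].
  { apply (isub _ B HB). intros z [[Hz _]| ->]; auto. }
  apply NNPP; intro Hd.
  destruct (fin_dep _ Hd) as [L [HLn [HL HLd]]].
  destruct (circ_fin C HC) as [LC [HLCn HLC]].
  destruct (mk_list (L ++ LC) (fun _ => True)) as [S [HSn HS]].
  destruct (mk_list S (fun z => C z /\ z <> f)) as [I0 [HI0n HI0]].
  destruct (mk_list S (fun z => z <> e)) as [J [HJn HJ]].
  assert (HCe : C e) by (apply (circ_has B); auto).
  assert (HSi : forall z, In z S <-> In z L \/ C z).
  { intro z. rewrite HS, in_app_iff, HLC. tauto. }
  assert (hI0 : indep M (fun x => In x I0)).
  { apply (isub _ (fun z => C z /\ z <> f)).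
    - destruct HC as [_ Hm]. apply Hm. { intros z [Hz _]; auto. }
      exists f. split; auto. intros [_ Hff]; auto.
    - intros z Hz. apply HI0 in Hz; tauto. }
  assert (hJ : indep M (fun x => In x J)).
  { apply (isub _ B HB). intros z Hz. apply HJ in Hz. destruct Hz as [Hz Hze].
    apply HSi in Hz. destruct Hz as [Hz|Hz].
    - destruct (HL z Hz) as [[H _]| ->]; tauto.
    - destruct (Hs z Hz) as [H| ->]; tauto. }
  assert (L1 : length I0 + 1 <= length S).
  { assert (length (f :: I0) <= length S); [|simpl in *; lia].
    apply NoDup_incl_length.
    - constructor; auto; rewrite HI0; tauto.
    - intros y [<-|Hy]. + apply HSi; auto. + apply HI0 in Hy; tauto. }
  assert (L2 : length S <= length J + 1).
  { assert (length S <= length (e :: J)); [|simpl in *; lia].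
    apply NoDup_incl_length; auto.
    intros y Hy. destruct (classic (y = e)) as [<-|Hne]; [left; auto|right].
    apply HJ; auto. }
  destruct (aug_to (length J - length I0) I0 J) as [K [HKn [HK [HK1 [HK2 HK3]]]]]; auto; [lia|].
  assert (HfK : ~ In f K).
  { intro HfK. apply (proj1 HC). apply (isub _ (fun x => In x K) HK).
    intros z Hz. destruct (classic (z = f)) as [->|Hzf]; auto.
    apply HK1. apply HI0. split; auto. apply HSi; auto. }
  destruct (mk_list S (fun z => z <> f)) as [S' [HS'n HS']].
  assert (L3 : length S' + 1 <= length S).
  { assert (length (f :: S') <= length S); [|simpl in *; lia].
    apply NoDup_incl_length.
    - constructor; auto; rewrite HS'; tauto.
    - intros y [<-|Hy]. + apply HSi; auto. + apply HS' in Hy; tauto. }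
  assert (Hinc : incl S' K).
  { apply (NoDup_length_incl HKn); [lia|].
    intros y Hy. apply HS'. split.
    - apply HK2 in Hy. apply in_app_iff in Hy. destruct Hy as [Hy|Hy].
      + apply HI0 in Hy; tauto. + apply HJ in Hy; tauto.
    - intros ->; auto. }
  apply HLd. apply (isub _ (fun x => In x K) HK). intros z Hz.
  apply Hinc. apply HS'. split.
  - apply HSi; auto.
  - intros ->. destruct (HL f Hz) as [[_ H]|H]; auto.
Qed.

Lemma circ_uniq : forall (B C0 C2 : E -> Prop) a, indep M B ->
  is_circuit M C0 -> (forall z, C0 z -> B z \/ z = a) ->
  is_circuit M C2 -> (forall z, C2 z -> B z \/ z = a) ->
  forall z, C2 z -> C0 z.
Proof.
  intros B C0 C2 a HB HC0 Hs0 HC2 Hs2 z Hz.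
  destruct (classic (z = a)) as [->|Hza]. { apply (circ_has B); auto. }
  pose proof (fc_exch B C2 a z HB HC2 Hs2 Hz Hza) as Hi.
  apply NNPP; intro Hz0. apply (proj1 HC0). apply (isub _ _ Hi).
  intros w Hw. destruct (Hs0 w Hw) as [H| ->]; [left; split; auto|right; auto].
  intros ->; auto.
Qed.

Lemma exch_fc : forall (B : E -> Prop) e f, indep M B ->
  ~ indep M (fun z => B z \/ z = e) -> B f -> indep M (exch B f e) ->
  fund_circuit M e B f.
Proof.
  intros B e f HB Hd Hf Hi.
  destruct (fin_dep _ Hd) as [L [_ [HL HLd]]].
  destruct (circ_in_list (length L) L) as [C [HC HCL]]; auto.
  exists C. split; auto. split.
  - intros z Hz. apply HL, HCL; auto.
  - apply NNPP; intro Hcf. apply (proj1 HC). apply (isub _ _ Hi).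
    intros z Hz. destruct (HL z (HCL z Hz)) as [H| ->]; [left; split; auto|right; auto].
    intros ->; auto.
Qed.

Lemma base_dep : forall (B : E -> Prop) e, is_base M B -> ~ B e ->
  ~ indep M (fun z => B z \/ z = e).
Proof.
  intros B e [HB Hm] He Hi. apply He. apply (Hm _ Hi); [intros z Hz; auto|right; auto].
Qed.

Lemma DM_char : forall (B : E -> Prop) e f, is_base M B ->
  (DM M B e f <-> ~ B e /\ f <> e /\ B f /\ indep M (exch B f e)).
Proof.
  intros B e f HBb. pose proof (proj1 HBb) as HB. split.
  - intros [He [[C [HC [Hs Hf]]] Hfe]]. repeat split; auto.
    + destruct (Hs f Hf) as [H|H]; tauto.
    + apply (fc_exch B C); auto.
  - intros [He [Hfe [Hf Hi]]]. split; auto. split; auto.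
    apply exch_fc; auto. apply base_dep; auto.
Qed.


Lemma fc_ext : forall (B B' : E -> Prop) e f, seteq B B' ->
  fund_circuit M e B f -> fund_circuit M e B' f.
Proof.
  intros B B' e f H [C [HC [Hs Hf]]]. exists C. split; auto. split; auto.
  intros z Hz. destruct (Hs z Hz) as [h|h]; [left; apply H; auto|right; auto].
Qed.

Lemma DM_ext : forall (B B' : E -> Prop) e f, seteq B B' -> DM M B e f -> DM M B' e f.
Proof.
  intros B B' e f H [He [Hf Hfe]]. split; [intro h; apply He, H; auto|split; auto].
  apply (fc_ext B); auto.
Qed.

Lemma base_ext : forall (B B' : E -> Prop), seteq B B' -> is_base M B -> is_base M B'.
Proof.
  intros B B' H [HB Hm]. split. { apply (indep_ext B); auto. }
  intros X HX Hs z Hz. apply H. apply (Hm X HX); auto. intros w Hw; apply Hs, H; auto.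
Qed.

Lemma DM_facts : forall (B : E -> Prop) x y, is_base M B -> DM M B x y ->
  exists C, is_circuit M C /\ (forall z, C z -> B z \/ z = x) /\ C y /\ C x /\
    ~ B x /\ B y /\ y <> x.
Proof.
  intros B x y Hb [Hx [[C [HC [Hs Hy]]] Hyx]]. exists C.
  split; [auto|split;[auto|split;[auto|split;[|split;[auto|split;[|auto]]]]]].
  - apply (circ_has B C x); auto. apply Hb.
  - destruct (Hs y Hy); tauto.
Qed.

Lemma base_exch : forall (B : E -> Prop) x y, is_base M B -> DM M B x y ->
  is_base M (exch B y x).
Proof.
  intros B x y Hb HD.
  destruct (DM_facts B x y Hb HD) as [C [HC [Hs [Hy [Hxc [Hx [HBy Hyx]]]]]]].
  pose proof (proj1 (DM_char B x y Hb) HD) as [_ [_ [_ Hi]]].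
  split; auto.
  intros X HX Hsub z Hz. apply NNPP; intro Hn.
  assert (Hzx : z <> x) by (intros ->; apply Hn; right; auto).
  destruct (classic (z = y)) as [->|Hzy].
  - apply (base_dep B x Hb Hx). apply (isub _ X HX).
    intros w [Hw| ->]; [|apply Hsub; right; auto].
    destruct (classic (w = y)) as [->|Hwy]; auto. apply Hsub; left; auto.
  - assert (HzB : ~ B z) by (intro; apply Hn; left; auto).
    destruct (fin_dep _ (base_dep B x Hb Hx)) as [L1 [_ [HL1 HL1d]]].
    destruct (fin_dep _ (base_dep B z Hb HzB)) as [L2 [_ [HL2 HL2d]]].
    destruct (mk_list (y :: L1 ++ L2) B) as [I [HIn HI]].
    destruct (mk_list (x :: z :: I) (fun w => w <> y)) as [K [HKn HK]].
    assert (hI : indep M (fun w => In w I)).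
    { apply (isub _ B (proj1 Hb)). intros w Hw; apply HI in Hw; tauto. }
    assert (hK : indep M (fun w => In w K)).
    { apply (isub _ X HX). intros w Hw. apply HK in Hw. destruct Hw as [[Hw|[Hw|Hw]] Hwy].
      - subst w. apply Hsub. right; auto.
      - subst w. auto.
      - apply Hsub. left. split; auto. apply HI in Hw; tauto. }
    assert (Hlen : length (x :: z :: I) <= length (y :: K)).
    { apply NoDup_incl_length.
      - constructor; [|constructor]; auto.
        + intros [->|Hw]; auto. apply HI in Hw; tauto.
        + intro Hw; apply HI in Hw; tauto.
      - intros w Hw. destruct (classic (w = y)) as [->|Hwy]; [left; auto|right].
        apply HK; auto. }
    simpl in Hlen.
    destruct (indep_aug E M I K HIn HKn hI hK) as [w [Hw1 [Hw2 Hw3]]]; [lia|].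
    apply HK in Hw1. destruct Hw1 as [[<-|[<-|Hw1]] _]; [| |tauto].
    + apply HL1d. apply (isub _ _ Hw3). intros v Hv.
      destruct (HL1 v Hv) as [H| ->]; [left|right; auto]. apply HI. split; auto.
      right; apply in_app_iff; auto.
    + apply HL2d. apply (isub _ _ Hw3). intros v Hv.
      destruct (HL2 v Hv) as [H| ->]; [left|right; auto]. apply HI. split; auto.
      right; apply in_app_iff; auto.
Qed.


Lemma exch_half : forall (B : E -> Prop) x y e f, is_base M B -> DM M B x y ->
  ~ fund_circuit M x B e -> ~ fund_circuit M x B f -> ~ B e -> B f -> f <> e ->
  indep M (exch B f e) -> indep M (exch (exch B y x) f e).
Proof.
  intros B x y e f Hb HD He Hf HBe HBf Hfe Hi.
  destruct (DM_facts B x y Hb HD) as [C [HC [Hs [Hy [Hxc [Hx [HBy Hyx]]]]]]].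
  assert (HinC : forall z, C z -> fund_circuit M x B z).
  { intros z Hz. exists C; auto. }
  assert (Hex : e <> x) by (intros ->; apply He, HinC; auto).
  assert (Hey : e <> y) by (intros ->; apply He, HinC; auto).
  assert (Hfx : f <> x) by (intros ->; apply Hf, HinC; auto).
  assert (Hfy : f <> y) by (intros ->; apply Hf, HinC; auto).
  assert (HDef : DM M B e f) by (apply DM_char; auto).
  pose proof (base_exch B e f Hb HDef) as Hb2.
  assert (HD2 : DM M (exch B f e) x y).
  { split; [|split; auto].
    - intros [[h _]|h]; auto.
    - exists C. split; auto. split; auto. intros z Hz.
      destruct (Hs z Hz) as [h|h]; [left; left; split; auto|right; auto].
      intros ->; apply Hf, HinC; auto. }
  pose proof (proj1 (DM_char _ x y Hb2) HD2) as [_ [_ [_ Hi2]]].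
  apply (indep_ext (exch (exch B f e) y x)) ; [intro z|exact Hi2]. unfold exch.
  destruct (classic (z = x)); destruct (classic (z = e)); subst; intuition congruence.
Qed.

Lemma ss_agree : forall (B : E -> Prop) x y e f, is_base M B -> DM M B x y ->
  ~ fund_circuit M x B e -> ~ fund_circuit M x B f ->
  (DM M (exch B y x) e f <-> DM M B e f).
Proof.
  intros B x y e f Hb HD He Hf.
  destruct (DM_facts B x y Hb HD) as [C [HC [Hs [Hy [Hxc [Hx [HBy Hyx]]]]]]].
  assert (HinC : forall z, C z -> fund_circuit M x B z).
  { intros z Hz. exists C; auto. }
  assert (Hex : e <> x) by (intros ->; apply He, HinC; auto).
  assert (Hey : e <> y) by (intros ->; apply He, HinC; auto).
  assert (Hfx : f <> x) by (intros ->; apply Hf, HinC; auto).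
  assert (Hfy : f <> y) by (intros ->; apply Hf, HinC; auto).
  pose proof (base_exch B x y Hb HD) as Hb1.
  assert (E1 : forall z, z <> x -> z <> y -> (exch B y x z <-> B z)).
  { intros z h1 h2. unfold exch. intuition congruence. }
  rewrite (DM_char _ e f Hb1), (DM_char _ e f Hb), (E1 e), (E1 f); auto.
  split; intros [h1 [h2 [h3 h4]]]; repeat split; auto.
  -
    assert (HD1 : DM M (exch B y x) y x).
    { split; [unfold exch; intuition congruence|split; auto].
      exists C. split; auto. split; auto. intros z Hz.
      destruct (classic (z = y)) as [->|Hzy]; [right; auto|left].
      destruct (Hs z Hz) as [h| ->]; [left; split; auto|right; auto]. }
    assert (Hsub : forall z, fund_circuit M y (exch B y x) z -> C z).
    { intros z [C2 [HC2 [Hs2 Hz]]]. apply (circ_uniq (exch B y x) C C2 y); auto.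
      - apply Hb1.
      - intros w Hw. destruct (classic (w = y)) as [->|Hwy]; [right; auto|left].
        destruct (Hs w Hw) as [h| ->]; [left; split; auto|right; auto]. }
    assert (h5 := exch_half (exch B y x) y x e f Hb1 HD1).
    assert (h6 : indep M (exch (exch (exch B y x) x y) f e)).
    { apply h5; auto; rewrite E1; auto. }
    apply (indep_ext (exch (exch (exch B y x) x y) f e)); [intro z|exact h6]. unfold exch.
    destruct (classic (z = x)); destruct (classic (z = y)); subst; intuition congruence.
  - apply exch_half; auto.
Qed.


Lemma cm_notin : forall (B : E -> Prop) (t : list E) w, ~ In w t ->
  (compose_M M B t w <-> B w).
Proof.
  intros B t w Hw. unfold compose_M. split.
  - intros [[H|[f [Hf _]]] _]; auto. exfalso; apply Hw, (arcs_in t w f Hf).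
  - intros H. split; [left; auto|]. intros [e [He _]]. apply Hw, (arcs_in t e w He).
Qed.

Lemma cm_nil : forall (B : E -> Prop) (t : list E), path_arcs t = [] ->
  seteq (compose_M M B t) B.
Proof.
  intros B t Ht z. unfold compose_M. rewrite Ht. simpl. split.
  - intros [[H|[f [[] _]]] _]; auto.
  - intros H; split; [left; auto|]. intros [e [[] _]].
Qed.

Lemma cm_skip : forall (B : E -> Prop) a b t', ~ DM M B a b ->
  seteq (compose_M M B (a :: b :: t')) (compose_M M B (b :: t')).
Proof.
  intros B a b t' Hd z. unfold compose_M.
  change (path_arcs (a :: b :: t')) with ((a, b) :: path_arcs (b :: t')).
  simpl In. split.
  - intros [H1 H2]. split.
    + destruct H1 as [H1|[f [[Hf|Hf] Hf']]]; auto.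
      * inversion Hf; subst; tauto.
      * right; exists f; auto.
    + intros [e [He He']]. apply H2. exists e; auto.
  - intros [H1 H2]. split.
    + destruct H1 as [H1|[f [Hf Hf']]]; auto. right; exists f; auto.
    + intros [e [[He|He] He']]; [inversion He; subst; tauto|]. apply H2; exists e; auto.
Qed.

Lemma cm_step : forall (B : E -> Prop) a b t', NoDup (a :: b :: t') -> DM M B a b ->
  seteq (compose_M M B (a :: b :: t')) (exch (compose_M M B (b :: t')) b a).
Proof.
  intros B a b t' Hn Hd z.
  assert (Ha : ~ In a (b :: t')) by (inversion Hn; auto).
  assert (HBa : ~ B a) by apply Hd.
  destruct (classic (z = a)) as [->|Hza].
  - split; intros _; [right; auto|]. unfold compose_M.
    change (path_arcs (a :: b :: t')) with ((a, b) :: path_arcs (b :: t')).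
    split.
    + right. exists b. split; [left; auto|auto].
    + intros [e [[He|He] _]].
      * inversion He; subst. apply Ha; left; auto.
      * apply Ha. apply (arcs_in (b :: t') e a) in He. tauto.
  - unfold exch, compose_M.
    change (path_arcs (a :: b :: t')) with ((a, b) :: path_arcs (b :: t')).
    simpl In. split.
    + intros [H1 H2]. left. split; [split|].
      * destruct H1 as [H1|[f [[Hf|Hf] Hf']]]; auto.
        -- inversion Hf; subst; tauto.
        -- right; exists f; auto.
      * intros [e [He He']]. apply H2. exists e; auto.
      * intros ->. apply H2. exists a. split; auto.
    + intros [[[H1 H2] H3]|H]; [|tauto]. split.
      * destruct H1 as [H1|[f [Hf Hf']]]; auto. right; exists f; auto.
      * intros [e [[He|He] He']]; [inversion He; subst; tauto|]. apply H2; exists e; auto.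
Qed.


Definition UM (B : E -> Prop) (P : list E) (z : E) : Prop :=
  exists a b, In (a, b) (path_arcs P) /\ DM M B a b /\ fund_circuit M a B z.

Lemma seteq_sym : forall X Y : E -> Prop, seteq X Y -> seteq Y X.
Proof. intros X Y H z; rewrite (H z); tauto. Qed.

Lemma DM_ext_iff : forall (B B' : E -> Prop) e f, seteq B B' -> (DM M B e f <-> DM M B' e f).
Proof. intros; split; apply DM_ext; auto using seteq_sym. Qed.

Lemma core : forall (B : E -> Prop) (P : list E), is_base M B -> NoDup P ->
  (forall l1 a x l2 w l3, P = l1 ++ a :: x :: l2 ++ w :: l3 -> ~ DM M B a w) ->
  is_base M (compose_M M B P) /\
  forall e f, ~ UM B P e -> ~ UM B P f -> (DM M (compose_M M B P) e f <-> DM M B e f).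
Proof.
  intros B P Hb.
  assert (Hnil : forall P, path_arcs P = [] -> is_base M (compose_M M B P) /\
    forall e f, ~ UM B P e -> ~ UM B P f -> (DM M (compose_M M B P) e f <-> DM M B e f)).
  { intros Q HQ. split.
    - apply (base_ext B); auto. apply seteq_sym, cm_nil; auto.
    - intros e f _ _. apply DM_ext_iff. apply cm_nil; auto. }
  induction P as [|a t IH]; intros Hn Hsc.
  { apply Hnil; reflexivity. }
  destruct t as [|b t']. { apply Hnil; reflexivity. }
  assert (Hn' : NoDup (b :: t')) by (inversion Hn; auto).
  destruct IH as [Hb' Hag]; auto.
  { intros l1 a0 x l2 w l3 H. apply (Hsc (a :: l1) a0 x l2 w l3). rewrite H. reflexivity. }
  assert (HUsub : forall z, UM B (b :: t') z -> UM B (a :: b :: t') z).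
  { intros z [a0 [b0 [H1 H2]]]. exists a0, b0. split; auto. right; auto. }
  set (B' := compose_M M B (b :: t')) in *.
  destruct (classic (DM M B a b)) as [Hd|Hd].
  - destruct (DM_facts B a b Hb Hd) as [C [HC [Hs [Hy [Hxc [Hx [HBy Hyx]]]]]]].
    assert (Ha : ~ In a (b :: t')) by (inversion Hn; auto).
    assert (HCB' : forall z, C z -> B' z \/ z = a).
    { intros z Hz. destruct (Hs z Hz) as [HBz| ->]; [left|right; auto].
      destruct (classic (In z (b :: t'))) as [Hin|Hin].
      - destruct Hin as [<-|Hin].
        + unfold B', compose_M. split; [left; auto|].
          intros [e [He _]]. apply (noarc_head t' b e Hn' He).
        + exfalso. destruct (in_split z t' Hin) as [l2 [l3 ->]].
          apply (Hsc [] a b l2 z l3); [reflexivity|].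
          split; auto. split; [exists C; auto|].
          intros ->. apply Ha. right. apply in_or_app; simpl; auto.
      - apply cm_notin; auto. }
    assert (HD' : DM M B' a b).
    { split; [|split; auto].
      - intro h. apply Hx. apply (cm_notin B (b :: t') a Ha). exact h.
      - exists C. auto. }
    assert (Hsub : forall z, fund_circuit M a B' z -> C z).
    { intros z [C2 [HC2 [Hs2 Hz]]]. apply (circ_uniq B' C C2 a); auto. apply Hb'. }
    pose proof (cm_step B a b t' Hn Hd) as Hst.
    split.
    + apply (base_ext (exch B' b a)); [apply seteq_sym; exact Hst|].
      apply base_exch; auto.
    + intros e f He Hf.
      etransitivity; [exact (DM_ext_iff _ _ e f Hst)|].
      etransitivity; [apply (ss_agree B' a b e f Hb' HD')|].
      * intro h. apply He. exists a, b. split; [left; auto|]. split; auto.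
        exists C; split; auto.
      * intro h. apply Hf. exists a, b. split; [left; auto|]. split; auto.
        exists C; split; auto.
      * apply Hag; intro h; [apply He|apply Hf]; apply HUsub; auto.
  - pose proof (cm_skip B a b t' Hd) as Hst. split.
    + apply (base_ext B'); auto. apply seteq_sym; exact Hst.
    + intros e f He Hf. etransitivity; [exact (DM_ext_iff _ _ e f Hst)|].
      apply Hag; intro h; [apply He|apply Hf]; apply HUsub; auto.
Qed.

End Mat.

Theorem claim3p6 (E : Type) (M N : finitary_matroid E) (BM BN : E -> Prop)
  (hBM : is_base M BM) (hBN : is_base N BN) (P : list E)
  (hP : is_dipath (Db M N BM BN) P)
  (hsc : no_shortcuts (Db M N BM BN) P) :
  let U := escort_union M N BM BN P in
  (forall e f, ~ U e -> ~ U f ->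
     (DM M (compose_M M BM P) e f <-> DM M BM e f)) /\
  (forall e f, ~ U e -> ~ U f ->
     (DM N (compose_N N BN P) e f <-> DM N BN e f)).
Proof.
  intros U. destruct hP as [HnP _]. split.
  - assert (SC : forall l1 a x l2 w l3, P = l1 ++ a :: x :: l2 ++ w :: l3 -> ~ DM M BM a w).
    { intros l1 a x l2 w l3 HP HD. apply (hsc a w). split; [left; exact HD|split].
      - exists l1, (x :: l2), l3. rewrite HP. reflexivity.
      - apply (noarc_mid P l1 (x :: l2) l3 a w HnP HP). discriminate. }
    destruct (core E M BM P hBM HnP SC) as [_ Hag].
    intros e f He Hf. apply Hag; intros [a [b [h1 [h2 h3]]]];
      [apply He|apply Hf]; exists a, b; split; auto; left; auto.
  - assert (SC : forall l1 a x l2 w l3, rev P = l1 ++ a :: x :: l2 ++ w :: l3 -> ~ DM N BN a w).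
    { intros l1 a x l2 w l3 HP HD.
      assert (HP' : P = rev l3 ++ w :: (rev l2 ++ [x]) ++ a :: rev l1).
      { rewrite <- (rev_involutive P), HP. rewrite rev_app_distr. simpl.
        rewrite rev_app_distr. simpl. rewrite <- !app_assoc. reflexivity. }
      apply (hsc w a). split; [right; exact HD|split].
      - exists (rev l3), (rev l2 ++ [x]), (rev l1). exact HP'.
      - apply (noarc_mid P (rev l3) (rev l2 ++ [x]) (rev l1) w a HnP HP').
        intro h. destruct (rev l2); discriminate. }
    destruct (core E N BN (rev P) hBN (NoDup_rev HnP) SC) as [_ Hag].
    assert (Hcm : seteq (compose_N N BN P) (compose_M N BN (rev P))).
    { intro z. unfold compose_N, compose_M, Dinv. split; intros [H1 H2]; split.
      - destruct H1 as [h|[g [h1 h2]]]; [left; auto|right; exists g; rewrite arcs_rev; auto].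
      - intros [g [h1 h2]]. apply H2. exists g. rewrite arcs_rev in h1; auto.
      - destruct H1 as [h|[g [h1 h2]]]; [left; auto|right; exists g; rewrite arcs_rev in h1; auto].
      - intros [g [h1 h2]]. apply H2. exists g. rewrite arcs_rev; auto. }
    intros e f He Hf. etransitivity; [exact (DM_ext_iff E N _ _ e f Hcm)|].
    apply Hag; intros [a [b [h1 [h2 h3]]]];
      [apply He|apply Hf]; exists b, a; rewrite arcs_rev in h1; split; auto; right;
      split; auto.
Qed.
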